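(* The thresholding algorithm with $t$ thresholds cannot achieve an approximation factor better than $1-\left(1-\frac{1}{t+1}\right)^t$. Precisely: let $t\ge1$ be an integer and $\varepsilon>0$. Then there is $k_0$ such that for every integer $k\ge k_0$ and all reals $c_1\ge c_2\ge\dots\ge c_t>0$, there exist a finite ground set $V$, a monotone submodular $f:2^V\to\mathbb{R}_{\ge0}$ with $OPT:=\max_{A\subseteq V,|A|\le k}f(A)>0$, and an execution of the thresholding algorithm with thresholds $\alpha_\ell=c_\ell\,\frac{OPT}{k}$ ($1\le \ell\le t$) whose output $G$ satisfies $f(G)\le\left(1-\left(1-\frac{1}{t+1}\right)^t+\varepsilon\right)OPT$.
   Context: A function $f:2^V\to\mathbb{R}_{\ge0}$ is submodular if $f(A\cup\{e\})-f(A)\ge f(B\cup\{e\})-f(B)$ for all $A\subseteq B\subseteq V$ and $e\notin B$, and monotone if $f(A\cup\{e\})-f(A)\ge 0$ for all $A$ and $e\notin A$. Write $f_A(e)=f(A\cup\{e\})-f(A)$. The thresholding algorithm with cardinality bound $k$ and thresholds $\alpha_1\ge\alpha_2\ge\dots\ge\alpha_t>0$ (which may be chosen with knowledge of $OPT$ and $k$): start with $G=\emptyset$; for $\ell=1,\dots,t$ in turn, as long as $|G|<k$ and some $e\in V\setminus G$ has $f_G(e)\ge\alpha_\ell$, add one such element $e$ to $G$ (the choice among eligible elements, i.e. the processing order, is arbitrary); when no such element exists or $|G|=k$, move to the next threshold. Output $G$. An execution is any run consistent with these rules. *)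

(* Defs.v *)
From HB Require Import structures.
From mathcomp Require Import all_boot all_order all_algebra.
From mathcomp Require Import reals.
Set Implicit Arguments. Unset Strict Implicit. Unset Printing Implicit Defensive.
Import Order.TTheory GRing.Theory Num.Theory.
Local Open Scope ring_scope.

Section Defs.
Variables (R : realType) (V : finType).

Definition marg (f : {set V} -> R) (A : {set V}) (e : V) : R := f (e |: A) - f A.

Definition nonneg_fun (f : {set V} -> R) : Prop := forall A, 0 <= f A.

Definition monotone (f : {set V} -> R) : Prop :=
  forall (A : {set V}) (e : V), e \notin A -> 0 <= marg f A e.

Definition submodular (f : {set V} -> R) : Prop :=
  forall (A B : {set V}) (e : V), A \subset B -> e \notin B -> marg f B e <= marg f A e.

(* OPT = max_{|A| <= k} f A  (f is nonnegative, so 0 as the neutral element is harmless) *)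
Definition OPT (f : {set V} -> R) (k : nat) : R :=
  \big[Num.max/0]_(A : {set V} | (#|A| <= k)%N) f A.

(* thr_exec f k t alpha l G out : starting at threshold index l (0-based, thresholds
   alpha 0 >= ... >= alpha (t-1)) with current set G, some execution of the
   thresholding algorithm outputs out. *)
Inductive thr_exec (f : {set V} -> R) (k t : nat) (alpha : nat -> R) :
    nat -> {set V} -> {set V} -> Prop :=
  | thr_done (l : nat) (G : {set V}) : (t <= l)%N -> thr_exec f k t alpha l G G
  | thr_add (l : nat) (G : {set V}) (e : V) (out : {set V}) : (l < t)%N -> (#|G| < k)%N -> e \notin G ->
      alpha l <= marg f G e -> thr_exec f k t alpha l (e |: G) out ->
      thr_exec f k t alpha l G out
  | thr_next (l : nat) (G out : {set V}) : (l < t)%N ->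
      ((k <= #|G|)%N \/ (forall e : V, e \notin G -> marg f G e < alpha l)) ->
      thr_exec f k t alpha l.+1 G out ->
      thr_exec f k t alpha l G out.

End Defs.

(* Main.v *)
Require Import Defs.
From HB Require Import structures.
From mathcomp Require Import all_boot all_order all_algebra.
From mathcomp Require Import reals.
From mathcomp Require Import ring lra zify.
Import Order.TTheory GRing.Theory Num.Theory.
Local Open Scope ring_scope.
Set Implicit Arguments. Unset Strict Implicit. Unset Printing Implicit Defensive.

Lemma Hlem (R : realType) (A M : R) (n : nat) : 0 <= A -> 0 <= M ->
  A ^+ n * ((n.+1)%:R * M - n%:R * A) <= M ^+ n.+1.
Proof.
move=> hA hM; elim: n => [|n IH].
  by rewrite expr0 expr1 mul1r mul0r subr0 mul1r.
have hX : 0 <= A ^+ n by apply: exprn_ge0.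
have hN : 0 <= n%:R :> R by apply: ler0n.
set X := A ^+ n in hX IH *.
have e1 : A ^+ n.+1 = A * X by rewrite exprS.
have e2 : M ^+ n.+2 = M * M ^+ n.+1 by rewrite exprS.
rewrite e1 e2.
have IH' := ler_wpM2l hM IH.
have key : 0 <= X * (n%:R + 1) * (M - A) ^+ 2.
  by apply: mulr_ge0; [apply: mulr_ge0 => //; lra | apply: sqr_ge0].
rewrite -!natr1 in IH' *.
rewrite -?natr1 in IH' *.
nra.
Qed.

Definition PP (R : realType) (l : nat) (z : R) : R := (1 + z / l%:R) ^+ l.

Lemma PP_ge1 (R : realType) (l : nat) (z : R) : 0 <= z -> 1 <= PP l z.
Proof.
move=> hz; apply: exprn_ege1; rewrite lerDl; apply: divr_ge0 => //; apply: ler0n.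
Qed.

Lemma Klem (R : realType) (l : nat) (y z : R) : 0 <= y -> 0 <= z ->
  (1 + y) * PP l z <= PP l.+1 (z + y).
Proof.
move=> hy hz; case: l => [|n].
  rewrite /PP expr0 mulr1 expr1 divr1; lra.
rewrite /PP.
set A := 1 + z / n.+1%:R.
set M := 1 + (z + y) / n.+2%:R.
have hA : 0 <= A by rewrite /A; have := PP_ge1 n.+1 hz; rewrite /PP => _;
  apply: addr_ge0 => //; apply: divr_ge0 => //; apply: ler0n.
have hM : 0 <= M by rewrite /M; apply: addr_ge0 => //; apply: divr_ge0;
  [lra| apply: ler0n].
have := Hlem n.+1 hA hM.
have -> : n.+2%:R * M - n.+1%:R * A = 1 + y.
  rewrite /M /A mulrDr mulr1 mulrDr mulr1 mulrCA divff ?mulr1; last by rewrite pnatr_eq0.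
  rewrite mulrCA divff ?mulr1; last by rewrite pnatr_eq0.
  rewrite -(addn1 n.+1) natrD; lra.
by rewrite mulrC.
Qed.

Lemma PP_monol (R : realType) (l l' : nat) (z : R) : 0 <= z -> (l <= l')%N ->
  PP l z <= PP l' z.
Proof.
move=> hz; elim: l' => [|l' IH]; first by rewrite leqn0 => /eqP ->.
rewrite leq_eqVlt => /orP [/eqP -> //| hl].
apply: le_trans (IH hl) _.
have := Klem l' (le_refl 0) hz; by rewrite addr0 addr0 mul1r.
Qed.

Lemma PP_monoz (R : realType) (l : nat) (z z' : R) : 0 <= z -> z <= z' ->
  PP l z <= PP l z'.
Proof.
move=> hz hzz; rewrite /PP; apply: lerXn2r; rewrite ?nnegrE.
- by apply: addr_ge0 => //; apply: divr_ge0 => //; apply: ler0n.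
- by apply: addr_ge0 => //; apply: divr_ge0; [lra | apply: ler0n].
- by rewrite lerD2l; apply: ler_wpM2r => //; rewrite invr_ge0 ler0n.
Qed.

Lemma powdiff (R : realType) (a b : R) (n : nat) : 0 <= b -> b <= a -> a <= 1 ->
  a ^+ n - b ^+ n <= n%:R * (a - b).
Proof.
move=> hb hba ha; elim: n => [|n IH]; first by rewrite !expr0 subrr mul0r.
rewrite !exprS.
have hbn : 0 <= b ^+ n by apply: exprn_ge0.
have hab : 0 <= a by lra.
have hbn1 : b ^+ n <= 1 by apply: exprn_ile1 => //; lra.
have : a * (a ^+ n - b ^+ n) <= n%:R * (a - b).
  have h0 : 0 <= a ^+ n - b ^+ n.
    by rewrite subr_ge0; apply: lerXn2r; rewrite ?nnegrE.

  apply: le_trans IH; rewrite -[X in _ <= X]mul1r; apply: ler_wpM2r => //.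
rewrite -natr1. nra.
Qed.

Definition sidx (R : realType) (t : nat) (c : nat -> R) (u : R) : nat :=
  find (fun l => c l <= u) (iota 0 t).
Definition dd (R : realType) (t k : nat) (c : nat -> R) (m : nat) (u : R) : R :=
  if (m < k)%N && (sidx t c u < t)%N then c (sidx t c u) / k%:R else 0.
Fixpoint useq (R : realType) (t k : nat) (c : nat -> R) (m : nat) : R :=
  if m is m'.+1 then useq t k c m' - dd t k c m' (useq t k c m') else 1.

Lemma sidx_le (R : realType) t (c : nat -> R) u : (sidx t c u <= t)%N.
Proof. by have := find_size (fun l => c l <= u) (iota 0 t); rewrite size_iota. Qed.

Lemma sidx_c (R : realType) t (c : nat -> R) u :
  (sidx t c u < t)%N -> c (sidx t c u) <= u.
Proof.
move=> h; have hh : has (fun l => c l <= u) (iota 0 t) by rewrite has_find size_iota.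
by have := nth_find 0%N hh; rewrite nth_iota ?add0n.
Qed.

Lemma sidx_before (R : realType) t (c : nat -> R) u l :
  (l < sidx t c u)%N -> u < c l.
Proof.
move=> h; have hlt : (l < t)%N := leq_trans h (sidx_le t c u).
have := before_find 0%N h; rewrite nth_iota ?add0n //= => /negbT.
by rewrite -ltNge.
Qed.

Lemma sidx_mono (R : realType) t (c : nat -> R) u u' :
  u' <= u -> (sidx t c u <= sidx t c u')%N.
Proof.
move=> h; rewrite leqNgt; apply/negP => hlt.
have h1 : (sidx t c u' < t)%N := leq_trans hlt (sidx_le t c u).
have := sidx_c h1; have := sidx_before hlt; lra.
Qed.


Lemma dd_ge0 (R : realType) t k (c : nat -> R) m u :
  (forall i, (i < t)%N -> 0 < c i) -> 0 <= dd t k c m u.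
Proof.
move=> hcp; rewrite /dd; case: ifP => // /andP [_ h].
by apply: divr_ge0; [apply/ltW/hcp | apply: ler0n].
Qed.

Lemma useq_nonincr (R : realType) t k (c : nat -> R) m :
  (forall i, (i < t)%N -> 0 < c i) -> useq t k c m.+1 <= useq t k c m.
Proof. move=> hcp /=; have := dd_ge0 k m (useq t k c m) hcp; lra. Qed.

Lemma useq_anti (R : realType) t k (c : nat -> R) m m' :
  (forall i, (i < t)%N -> 0 < c i) -> (m <= m')%N -> useq t k c m' <= useq t k c m.
Proof.
move=> hcp; elim: m' => [|m' IH]; first by rewrite leqn0 => /eqP ->.
rewrite leq_eqVlt => /orP [/eqP -> //| h].
exact: le_trans (useq_nonincr k m' hcp) (IH h).
Qed.

Lemma useq_le1 (R : realType) t k (c : nat -> R) m :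
  (forall i, (i < t)%N -> 0 < c i) -> useq t k c m <= 1.
Proof. by move=> hcp; apply: (useq_anti k hcp (leq0n m)). Qed.

Lemma useq_ge0 (R : realType) t k (c : nat -> R) m :
  (1 <= k)%N -> (forall i, (i < t)%N -> 0 < c i) -> 0 <= useq t k c m.
Proof.
move=> hk hcp; elim: m => [|m IH] /=; first exact: ler01.
rewrite /dd; case: ifP => [/andP [_ h]|_]; last by rewrite subr0.
have hc := sidx_c h; have hc0 := hcp _ h.
have hK : 1 <= k%:R :> R by rewrite ler1n.
have : c (sidx t c (useq t k c m)) / k%:R <= c (sidx t c (useq t k c m)).
  rewrite ler_pdivrMr ?ltr0n //; nra.
lra.
Qed.

Lemma dd_anti1 (R : realType) t k (c : nat -> R) m :
  (forall i j, (i <= j)%N -> (j < t)%N -> c j <= c i) ->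
  (forall i, (i < t)%N -> 0 < c i) ->
  dd t k c m.+1 (useq t k c m.+1) <= dd t k c m (useq t k c m).
Proof.
move=> hcm hcp.
rewrite {1}/dd; case: ifP => [/andP [h1 h2]|_]; last exact: dd_ge0.
have hs := sidx_mono t c (useq_nonincr k m hcp).
rewrite /dd (ltnW h1) (leq_ltn_trans hs h2) /=.
apply: ler_wpM2r; first by rewrite invr_ge0 ler0n.
exact: hcm.
Qed.

Lemma dd_anti (R : realType) t k (c : nat -> R) m m' :
  (forall i j, (i <= j)%N -> (j < t)%N -> c j <= c i) ->
  (forall i, (i < t)%N -> 0 < c i) -> (m <= m')%N ->
  dd t k c m' (useq t k c m') <= dd t k c m (useq t k c m).
Proof.
move=> hcm hcp; elim: m' => [|m' IH]; first by rewrite leqn0 => /eqP ->.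
rewrite leq_eqVlt => /orP [/eqP -> //| h].
exact: le_trans (dd_anti1 k m' hcm hcp) (IH h).
Qed.

Lemma inv_close (R : realType) (k l p q : nat) (u cl : R) :
  (1 < k)%N -> 0 <= u -> 0 < cl ->
  1 <= (u + p%:R * cl / k%:R) * PP l (q%:R / (k%:R - 1)) ->
  ((0 < p)%N -> cl * (k%:R - 1) / k%:R <= u) ->
  1 <= u * PP l.+1 ((p + q)%:R / (k%:R - 1)).
Proof.
move=> hk hu hc H1 H2.
have hK1 : 0 < k%:R - 1 :> R by rewrite subr_gt0 ltr1n.
have hK0 : 0 < k%:R :> R by rewrite ltr0n; apply: ltnW.
have hW : u + p%:R * cl / k%:R <= u * (1 + p%:R / (k%:R - 1)).
  case: (posnP p) => [->|hp]; first by rewrite mulr0n !mul0r addr0; lra.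
  have := H2 hp; rewrite mulrAC => H3.
  have H4 : cl / k%:R <= u / (k%:R - 1) by rewrite ler_pdivlMr.
  rewrite mulrDr mulr1 -mulrA [u * _]mulrCA.
  rewrite lerD2l; apply: ler_wpM2l => //; apply: ler0n.
have hP0 : 0 <= PP l (q%:R / (k%:R - 1) : R).
  have hq : 0 <= q%:R / (k%:R - 1) :> R by apply: divr_ge0; [apply: ler0n| apply: ltW].
  have := PP_ge1 l hq; lra.
apply: le_trans H1 _; apply: le_trans (ler_wpM2r hP0 hW) _.
rewrite -mulrA; apply: ler_wpM2l => //.
rewrite natrD.
have -> : (p%:R + q%:R) / (k%:R - 1) = q%:R / (k%:R - 1) + p%:R / (k%:R - 1) :> R
  by rewrite mulrDl addrC.
apply: Klem; apply: divr_ge0; (try apply: ler0n); apply: ltW => //.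
Qed.

Lemma inv_all (R : realType) t k (c : nat -> R) :
  (1 < k)%N -> (1 <= t)%N ->
  (forall i j, (i <= j)%N -> (j < t)%N -> c j <= c i) ->
  (forall i, (i < t)%N -> 0 < c i) ->
  forall m, (m <= k)%N -> exists l p q : nat,
    [/\ (l < t)%N, (p + q <= m)%N,
        ((m < k)%N -> (l <= sidx t c (useq t k c m))%N),
        1 <= (useq t k c m + p%:R * c l / k%:R) * PP l (q%:R / (k%:R - 1)) &
        ((0 < p)%N -> c l * (k%:R - 1) / k%:R <= useq t k c m)].
Proof.
move=> hk ht hcm hcp; elim => [|m IH] hm.
  exists 0%N, 0%N, 0%N; split => //.
  by rewrite /= !mul0r addr0 mul1r /PP expr0.
have hmk : (m < k)%N := hm.
have [l [p [q [hl hpq ha hW hc]]]] := IH (ltnW hm).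
have hK0 : 0 < k%:R :> R by rewrite ltr0n; apply: ltnW.
have hK1 : 0 < k%:R - 1 :> R by rewrite subr_gt0 ltr1n.
set u0 := useq t k c m.
have hu0 : 0 <= u0 by apply: useq_ge0 => //; apply: ltnW.
have hstep : useq t k c m.+1 = u0 - dd t k c m u0 by [].
case hs: (sidx t c u0 < t)%N.
  have hd : dd t k c m u0 = c (sidx t c u0) / k%:R by rewrite /dd hmk hs.
  have hcs := sidx_c hs.
  have hnext : ((m.+1 < k)%N -> (sidx t c u0 <= sidx t c (useq t k c m.+1))%N).
    move=> _; apply: sidx_mono; apply: useq_nonincr => //.
  have hcnew : c (sidx t c u0) * (k%:R - 1) / k%:R <= u0 - c (sidx t c u0) / k%:R.
    rewrite mulrBr mulr1 mulrBl mulfK; first lra.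
    by rewrite pnatr_eq0 -lt0n ltnW.
  have := ha hmk; rewrite leq_eqVlt => /orP [/eqP hls | hls].
    exists l, p.+1, q; split.
    - by [].
    - by rewrite addSn ltnS.
    - by rewrite hls.
    - rewrite hstep hd -hls -(addn1 p) natrD.
      by have -> : u0 - c l / k%:R + (p%:R + 1) * c l / k%:R = u0 + p%:R * c l / k%:R
        by rewrite !mulrDl; ring.
    - by move=> _; rewrite hstep hd hls; exact: hcnew.
  exists (sidx t c u0), 1%N, (p + q)%N; split.
  - exact: hs.
  - by rewrite add1n ltnS.
  - exact: hnext.
  - rewrite hstep hd mul1r subrK.
    have h1 := inv_close hk hu0 (hcp _ hl) hW hc.
    apply: le_trans h1 _; apply: ler_wpM2l => //; apply: PP_monol => //.
    by apply: divr_ge0; [apply: ler0n| apply: ltW].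
  - by move=> _; rewrite hstep hd; exact: hcnew.
have hd : dd t k c m u0 = 0 by rewrite /dd hmk hs.
exists l, p, q; split => //.
- by apply: leq_trans hpq _.
- move=> _; rewrite hstep hd subr0.
  have : sidx t c u0 = t by apply/eqP; rewrite eqn_leq sidx_le leqNgt hs.
  by move=> ->; apply: ltnW.
- by rewrite hstep hd subr0.
- by rewrite hstep hd subr0.
Qed.

Lemma useq_bound (R : realType) t k (c : nat -> R) :
  (1 < k)%N -> (1 <= t)%N ->
  (forall i j, (i <= j)%N -> (j < t)%N -> c j <= c i) ->
  (forall i, (i < t)%N -> 0 < c i) ->
  1 <= useq t k c k * PP t (k%:R / (k%:R - 1)).
Proof.
move=> hk ht hcm hcp.
have [l [p [q [hl hpq ha hW hc]]]] := inv_all hk ht hcm hcp (leqnn k).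
have hK1 : 0 < k%:R - 1 :> R by rewrite subr_gt0 ltr1n.
have hu : 0 <= useq t k c k by apply: useq_ge0 => //; apply: ltnW.
have h1 := inv_close hk hu (hcp _ hl) hW hc.
apply: le_trans h1 _; apply: ler_wpM2l => //.
have hz : 0 <= (p + q)%:R / (k%:R - 1) :> R by apply: divr_ge0; [apply: ler0n| apply: ltW].
apply: (le_trans (PP_monol hz hl)).
apply: PP_monoz => //.
by apply: ler_wpM2r; [rewrite invr_ge0; apply: ltW | rewrite ler_nat].
Qed.

Definition cnt (k : nat) (b : bool) (S : {set bool * 'I_k}) : nat :=
  #|[set i : 'I_k | (b, i) \in S]|.

Definition fF (R : realType) (t k : nat) (c : nat -> R) (S : {set bool * 'I_k}) : R :=
  1 - (1 - (cnt true S)%:R / k%:R) * useq t k c (cnt false S).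

Arguments fF {R} t k c S.

Lemma cnt_le k b (S : {set bool * 'I_k}) : (cnt b S <= k)%N.
Proof. by rewrite /cnt; apply: leq_trans (max_card _) _; rewrite card_ord. Qed.

Lemma cnt_add k (b b' : bool) (j : 'I_k) (S : {set bool * 'I_k}) :
  (b, j) \notin S -> cnt b' ((b, j) |: S) = ((b == b') + cnt b' S)%N.
Proof.
move=> hj; rewrite /cnt; case: (eqVneq b b') => [<-|hne].
  have -> : [set i | (b, i) \in (b, j) |: S] = j |: [set i | (b, i) \in S].
    by apply/setP => i; rewrite !inE xpair_eqE eqxx.
  by rewrite cardsU1 inE hj.
have -> : [set i | (b', i) \in (b, j) |: S] = [set i | (b', i) \in S].
  by apply/setP => i; rewrite !inE xpair_eqE eq_sym (negbTE hne).
by [].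
Qed.

Lemma marg_true (R : realType) t k (c : nat -> R) (A : {set bool * 'I_k}) j :
  (true, j) \notin A ->
  marg (fF t k c) A (true, j) = useq t k c (cnt false A) / k%:R.
Proof.
move=> hj; rewrite /marg /fF !cnt_add //= add0n add1n -natr1.
rewrite mulrDl; ring.
Qed.

Lemma marg_false (R : realType) t k (c : nat -> R) (A : {set bool * 'I_k}) j :
  (false, j) \notin A ->
  marg (fF t k c) A (false, j) =
  (1 - (cnt true A)%:R / k%:R) * dd t k c (cnt false A) (useq t k c (cnt false A)).
Proof.
move=> hj; rewrite /marg /fF !cnt_add //= add0n.
ring.
Qed.

Lemma one_sub_ge0 (R : realType) k (n : nat) : (1 <= k)%N -> (n <= k)%N ->
  0 <= 1 - n%:R / k%:R :> R.
Proof.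
move=> hk hn; rewrite subr_ge0 ler_pdivrMr ?ltr0n // mul1r ler_nat //.
Qed.

Lemma cnt_sub k b (A B : {set bool * 'I_k}) : A \subset B -> (cnt b A <= cnt b B)%N.
Proof.
move=> hAB; apply: subset_leq_card; apply/subsetP => i; rewrite !inE.
exact: (subsetP hAB).
Qed.

Lemma fF_props (R : realType) t k (c : nat -> R) : (1 <= k)%N ->
  (forall i j, (i <= j)%N -> (j < t)%N -> c j <= c i) ->
  (forall i, (i < t)%N -> 0 < c i) ->
  [/\ nonneg_fun (fF t k c), monotone (fF t k c), submodular (fF t k c) &
      forall S, fF t k c S <= 1].
Proof.
move=> hk hcm hcp.
have hK : 0 < k%:R :> R by rewrite ltr0n.
have hx : forall S : {set bool * 'I_k}, 0 <= 1 - (cnt true S)%:R / k%:R :> R.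
  by move=> S; apply: (one_sub_ge0 R hk (cnt_le true S)).
have hx1 : forall S : {set bool * 'I_k}, 1 - (cnt true S)%:R / k%:R <= 1 :> R.
  by move=> S; rewrite lerBlDr lerDl; apply: divr_ge0; [apply: ler0n | apply: ltW].
have hu : forall m, 0 <= useq t k c m by move=> m; apply: useq_ge0.
have hu1 : forall m, useq t k c m <= 1 by move=> m; apply: useq_le1.
split.
- move=> S; rewrite /fF subr_ge0; apply: mulr_ile1 => //.
- move=> A [[] j] hj.
    by rewrite marg_true //; apply: divr_ge0 => //; apply: ltW.
  by rewrite marg_false //; apply: mulr_ge0 => //; apply: dd_ge0.
- move=> A B e hAB he.
  have heA : e \notin A by apply: contra he; apply: (subsetP hAB).
  case: e he heA => [[] j] he heA.
    rewrite !marg_true //; apply: ler_wpM2r; first by rewrite invr_ge0 ltW.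
    by apply: useq_anti => //; apply: cnt_sub.
  rewrite !marg_false //; apply: ler_pM => //; first exact: dd_ge0.
    rewrite lerD2l lerN2; apply: ler_wpM2r; first by rewrite invr_ge0 ltW.
    by rewrite ler_nat; apply: cnt_sub.
  by apply: dd_anti => //; apply: cnt_sub.
- move=> S; rewrite /fF lerBlDr lerDl; apply: mulr_ge0 => //.
Qed.

Definition Ostar k : {set bool * 'I_k} := [set (true, i) | i : 'I_k].

Lemma Ostar_card k : (#|Ostar k| <= k)%N.
Proof. by rewrite /Ostar; apply: leq_trans (leq_imset_card _ _) _; rewrite card_ord. Qed.

Lemma fF_Ostar (R : realType) t k (c : nat -> R) : (1 <= k)%N -> fF t k c (Ostar k) = 1.
Proof.
move=> hk; rewrite /fF.
have -> : cnt true (Ostar k) = k.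
  rewrite /cnt; have -> : [set i | (true, i) \in Ostar k] = setT.
    by apply/setP => i; rewrite !inE; apply/imsetP; exists i.
  by rewrite cardsT card_ord.
by rewrite divff ?pnatr_eq0 -?lt0n // subrr mul0r subr0.
Qed.

Lemma OPT_fF (R : realType) t k (c : nat -> R) : (1 <= k)%N ->
  (forall i j, (i <= j)%N -> (j < t)%N -> c j <= c i) ->
  (forall i, (i < t)%N -> 0 < c i) ->
  OPT (fF t k c) k = 1.
Proof.
move=> hk hcm hcp; have [_ _ _ hle] := fF_props hk hcm hcp.
rewrite /OPT; apply/eqP; rewrite eq_le; apply/andP; split.
  apply: (big_ind (fun x => x <= 1)) => //.
  by move=> x y hx hy; rewrite ge_max hx hy.
by rewrite (bigD1 (Ostar k)) ?Ostar_card //= le_max fF_Ostar ?lexx.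
Qed.

Lemma exec_ex (R : realType) t k (c : nat -> R) : (1 <= k)%N ->
  (forall i j, (i <= j)%N -> (j < t)%N -> c j <= c i) ->
  (forall i, (i < t)%N -> 0 < c i) ->
  forall n l (G : {set bool * 'I_k}),
  ((t - l) + (k - cnt false G) <= n)%N -> (l <= t)%N -> cnt true G = 0%N ->
  #|G| = cnt false G ->
  ((cnt false G < k)%N -> (l <= sidx t c (useq t k c (cnt false G)))%N) ->
  exists out, thr_exec (fF t k c) k t (fun l => c l * 1 / k%:R) l G out /\
              cnt true out = 0%N.
Proof.
move=> hk hcm hcp; elim => [|n IH] l G hn hl hx hG ha.
  exists G; split => //; apply: thr_done; lia.
case: (leqP t l) => htl; first by exists G; split => //; apply: thr_done.
have hK : 0 < k%:R :> R by rewrite ltr0n.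
set m := cnt false G in hn hG ha.
case hadd: ((m < k)%N && (sidx t c (useq t k c m) == l)).
  move/andP: hadd => [hmk /eqP hsl].
  case: (pickP (fun i : 'I_k => (false, i) \notin G)) => [j hj | hnone]; last first.
    have : [set i : 'I_k | (false, i) \in G] = setT.
      by apply/setP => i; rewrite !inE; move: (hnone i) => /= /negbFE.
    move=> hT; move: hmk; rewrite /m /cnt hT cardsT card_ord ltnn //.
  have hm1 : cnt false ((false, j) |: G) = m.+1 by rewrite cnt_add.
  have hx1 : cnt true ((false, j) |: G) = 0%N by rewrite cnt_add.
  have p1 : ((t - l) + (k - cnt false ((false, j) |: G)) <= n)%N by rewrite hm1; lia.
  have p2 : #|(false, j) |: G| = cnt false ((false, j) |: G) by rewrite hm1 cardsU1 hj hG.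
  have p3 : (cnt false ((false, j) |: G) < k)%N ->
      (l <= sidx t c (useq t k c (cnt false ((false, j) |: G))))%N.
    rewrite hm1 => _; rewrite -[X in (X <= _)%N]hsl; apply: sidx_mono; exact: useq_nonincr.
  have [out [hex hxo]] := IH l ((false, j) |: G) p1 hl hx1 p2 p3.
  exists out; split => //.
  apply: (thr_add (e := (false, j))) => //.
  - by rewrite hG.
  - by rewrite marg_false // hx mul0r subr0 mul1r mulr1 /dd -/m hmk hsl htl /=.
have hlt : (m < k)%N -> (l < sidx t c (useq t k c m))%N.
  move=> hmk0; move: hadd; rewrite hmk0 /= => /negbT hne.
  by rewrite ltn_neqAle eq_sym hne ha.
have p1 : ((t - l.+1) + (k - cnt false G) <= n)%N by rewrite -/m; lia.
have p3 : (cnt false G < k)%N -> (l.+1 <= sidx t c (useq t k c (cnt false G)))%N.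
  by move=> hmk; apply: hlt.
have [out [hex hxo]] := IH l.+1 G p1 htl hx hG p3.
exists out; split => //.
apply: thr_next => //.
case: (leqP k m) => hmk; first by left; rewrite hG.
right => -[[] j] hj.
  rewrite marg_true // mulr1 ltr_pM2r ?invr_gt0 //.
  exact: sidx_before (hlt hmk).
rewrite marg_false // hx mul0r subr0 mul1r mulr1 /dd -/m hmk /=.
case: ifP => hs.
  rewrite ltr_pM2r ?invr_gt0 //.
  have := sidx_c hs; have := sidx_before (hlt hmk); lra.
by apply: divr_gt0 => //; apply: hcp.
Qed.

Lemma final_num (R : realType) (t k : nat) (u eps : R) :
  (1 <= t)%N -> (1 < k)%N -> 0 <= u -> (k%:R - 1)^-1 <= eps ->
  1 <= u * PP t (k%:R / (k%:R - 1)) ->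
  1 - u <= 1 - (1 - 1 / (t.+1)%:R) ^+ t + eps.
Proof.
move=> ht hk hu heps H.
set T := t%:R : R.
set K := k%:R : R.
have hT : 1 <= T by rewrite /T ler1n.
have hK1 : 0 < K - 1 by rewrite subr_gt0 /K ltr1n.
set z := K / (K - 1).
have hz1 : z - 1 = (K - 1)^-1.
  rewrite /z -[X in _ - X](divff (lt0r_neq0 hK1)) -mulrBl.
  by rewrite opprB addrCA subrr addr0 mul1r.
have hz : 1 <= z.
  have : 0 <= (K - 1)^-1 by rewrite invr_ge0 ltW.
  lra.
set b := T / (T + z).
have hTz : 0 < T + z by lra.
have hb : b * (T + z) = T by rewrite /b mulfVK // lt0r_neq0.
have hb0 : 0 <= b by rewrite /b divr_ge0 // ltW //; lra.
set a := 1 - 1 / (t.+1)%:R.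
have hT1 : (t.+1)%:R = T + 1 by rewrite -natr1.
have ha : a * (T + 1) = T.
  rewrite /a hT1 mulrBl mul1r mul1r mulVf; first by ring.
  by apply: lt0r_neq0; lra.
have hba : b <= a by nra.
have ha1 : a <= 1 by nra.
have hab : T * (a - b) <= z - 1 by nra.
have hpd := powdiff t hb0 hba ha1.
have hbt : b ^+ t <= u.
  have e : b * (1 + z / T) = 1.
    have hT0 : T != 0 by apply: lt0r_neq0; lra.
    have hTz0 : T + z != 0 by apply: lt0r_neq0.
    by rewrite /b; field; apply/andP; split.
  have hbt0 : 0 <= b ^+ t by apply: exprn_ge0.
  have := ler_wpM2l hbt0 H.
  rewrite mulr1 mulrCA /PP -exprMn -/T e expr1n mulr1 //.
lra.
Qed.

Unset Implicit Arguments.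

Theorem theorem4 (R : realType) (t : nat) (eps : R) :
  (1 <= t)%N -> 0 < eps ->
  exists k0 : nat, forall k : nat, (k0 <= k)%N ->
  forall c : nat -> R,
    (forall i j, (i <= j)%N -> (j < t)%N -> c j <= c i) ->
    (forall i, (i < t)%N -> 0 < c i) ->
    exists (V : finType) (f : {set V} -> R),
      [/\ nonneg_fun f, monotone f, submodular f, 0 < OPT f k &
      exists G : {set V},
        thr_exec f k t (fun l => c l * OPT f k / k%:R) 0 set0 G /\
        f G <= (1 - (1 - 1 / (t.+1)%:R) ^+ t + eps) * OPT f k].
Proof.
move=> ht heps.
set N := Num.bound (eps^-1).
exists N.+2 => k hk c hcm hcp.
have hk1 : (1 < k)%N by apply: leq_trans hk.
have hk0 : (1 <= k)%N by apply: ltnW.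
have [hnn hmon hsub _] := fF_props hk0 hcm hcp.
have hOPT := OPT_fF hk0 hcm hcp.
exists (bool * 'I_k)%type, (fF t k c).
rewrite hOPT; split => //.
have h0 : forall b, cnt b (set0 : {set bool * 'I_k}) = 0%N.
  move=> b; rewrite /cnt; apply/eqP; rewrite cards_eq0; apply/eqP/setP => i.
  by rewrite !inE.
have p1 : ((t - 0) + (k - cnt false (set0 : {set bool * 'I_k})) <= (t - 0) + (k - 0))%N.
  by rewrite h0.
have p2 : #|(set0 : {set bool * 'I_k})| = cnt false (set0 : {set bool * 'I_k}).
  by rewrite cards0 h0.
have p3 : (cnt false (set0 : {set bool * 'I_k}) < k)%N ->
    (0 <= sidx t c (useq t k c (cnt false (set0 : {set bool * 'I_k}))))%N.
  by move=> _.
have [out [hex hxo]] := exec_ex hk0 hcm hcp p1 (leq0n t) (h0 true) p2 p3.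
exists out; split => //.
rewrite mulr1 /fF hxo mul0r subr0 mul1r.
have hmo := useq_anti k hcp (cnt_le false out).
have hb := useq_bound hk1 ht hcm hcp.
have hu : 0 <= useq t k c k by apply: useq_ge0.
have heps' : (k%:R - 1)^-1 <= eps.
  have he : 0 <= eps^-1 by rewrite invr_ge0 ltW.
  have hN := archi_boundP he.
  rewrite -/N in hN.
  have hKN : N.+2%:R <= k%:R :> R by rewrite ler_nat.
  have hN2 : N.+2%:R = N%:R + 2 :> R by rewrite -addn2 natrD.
  apply: ltW; rewrite invf_plt ?posrE //; first lra.
  lra.
have := final_num ht hk1 hu heps' hb.
lra.
Qed.
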